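(* Let $N\ge 2$ be an integer. For nonnegative reals $h_1,\dots,h_N,g_1,\dots,g_N$ define (logarithms base $2$, $[x]^+=\max\{x,0\}$, $\Omega^c=\{1,\dots,N\}\setminus\Omega$) $$\overline C:=\min_{\Omega\subseteq\{1,\dots,N\}}\Big\{\log\Big(1+\big(\textstyle\sum_{i\in\Omega}g_i\big)^2\Big)+\log\Big(1+\sum_{j\in\Omega^c}h_j^2\Big)\Big\},$$ and for $\Delta>0$ $$R_{\mathrm{QMF}}(\Delta):=\min_{\Omega\subseteq\{1,\dots,N\}}\Big[\log\Big(1+\sum_{i\in\Omega}g_i^2\Big)+\log\Big(1+\sum_{j\in\Omega^c}\frac{h_j^2}{1+\Delta}\Big)-|\Omega|\log\frac{1+\Delta}{\Delta}\Big]^+.$$ Let $$\mathrm{gap}^*(\Delta;N):=\max\Big\{\log N+N\log\frac{1+\Delta}{\Delta},\ \log(N-1)+(N-1)\log\frac{1+\Delta}{\Delta}+\log(1+\Delta)\Big\}.$$ Then: (i) for every $\Delta>0$ and all nonnegative $h_i,g_i$, $\overline C-R_{\mathrm{QMF}}(\Delta)\le\mathrm{gap}^*(\Delta;N)$; (ii) $\min_{\Delta>0}\mathrm{gap}^*(\Delta;N)$ is attained at $\Delta_{\mathrm{opt}}=\frac{N}{N-1}$ if $N=2$ and at $\Delta_{\mathrm{opt}}=N-1$ if $N>2$, and the minimum value is $$\mathrm{gap}^*(N)=\begin{cases}2\log 3-1,& N=2,\\ N\log\frac{N}{N-1}+2\log(N-1),& N>2;\end{cases}$$ in particular, with the channel-independent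 choice $\Delta=\Delta_{\mathrm{opt}}$ at all relays, $\overline C-R_{\mathrm{QMF}}(\Delta_{\mathrm{opt}})\le\mathrm{gap}^*(N)=\Theta(\log N)$.
   Context: The setting is the full-duplex Gaussian $N$-relay diamond network: a source transmits $X$ with $\mathbb E|X|^2\le1$; relay $i$ receives $Y_i=\mathsf h_iX+Z_i$ and transmits $X_i$ with $\mathbb E|X_i|^2\le 1$; the destination receives $Y=\sum_i\mathsf g_iX_i+Z$, with i.i.d. $\mathcal{CN}(0,1)$ noises, and $h_i=|\mathsf h_i|$, $g_i=|\mathsf g_i|$. $\overline C$ is the cutset upper bound on capacity, and $R_{\mathrm{QMF}}(\Delta)$ is the quantize-map-and-forward achievable rate when every relay uses a Gaussian vector quantizer $\hat Y_i=Y_i+\hat Z_i$, $\hat Z_i\sim\mathcal{CN}(0,\Delta)$. *)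

(* Defs.v *)
From HB Require Import structures.
From mathcomp Require Import all_boot all_order all_algebra.
From mathcomp Require Import all_classical all_reals.
From mathcomp Require Import exp.
Set Implicit Arguments. Unset Strict Implicit. Unset Printing Implicit Defensive.
Import Order.TTheory GRing.Theory Num.Theory.
Local Open Scope ring_scope.

Section Defs.
Variable R : realType.

Definition log2 (x : R) : R := ln x / ln 2.

Definition pos_part (x : R) : R := Num.max x 0.

(* minimum of F over all subsets Omega of {1..N} (here 'I_N);
   the seed F setT is itself one of the values, so this is the exact min *)
Definition min_subsets (N : nat) (F : {set 'I_N} -> R) : R :=
  \big[Order.min/F [set: 'I_N]%SET]_(S : {set 'I_N}) F S.

Definition Cbar (N : nat) (h g : 'I_N -> R) : R :=
  min_subsets (fun S : {set 'I_N} =>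
    log2 (1 + (\sum_(i in S) g i) ^+ 2) + log2 (1 + \sum_(j in ~: S) h j ^+ 2)).

Definition RQMF (N : nat) (h g : 'I_N -> R) (D : R) : R :=
  min_subsets (fun S : {set 'I_N} =>
    pos_part (log2 (1 + \sum_(i in S) g i ^+ 2)
              + log2 (1 + \sum_(j in ~: S) h j ^+ 2 / (1 + D))
              - #|S|%:R * log2 ((1 + D) / D))).

Definition gapstar (D : R) (N : nat) : R :=
  Num.max (log2 N%:R + N%:R * log2 ((1 + D) / D))
          (log2 (N.-1)%:R + (N.-1)%:R * log2 ((1 + D) / D) + log2 (1 + D)).

Definition Delta_opt (N : nat) : R :=
  if N == 2%N then N%:R / (N.-1)%:R else (N.-1)%:R.

Definition gapstar_val (N : nat) : R :=
  if N == 2%N then 2 * log2 3 - 1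
  else N%:R * log2 (N%:R / (N.-1)%:R) + 2 * log2 (N.-1)%:R.

End Defs.

(* Main.v *)
Require Import Defs.
From HB Require Import structures.
From mathcomp Require Import all_boot all_order all_algebra.
From mathcomp Require Import all_classical all_reals.
From mathcomp Require Import exp.
From mathcomp Require Import ring lra zify.
Import Order.TTheory GRing.Theory Num.Theory.
Local Open Scope ring_scope.

Section H.
Variable R : realType.

Lemma cs (I : finType) (S : {set I}) (g : I -> R) :
  (\sum_(i in S) g i) ^+ 2 <= #|S|%:R * \sum_(i in S) g i ^+ 2.
Proof.
set G := \sum_(i in S) g i; set G2 := \sum_(i in S) g i ^+ 2.
have H : 0 <= \sum_(i in S) \sum_(j in S) (g i - g j) ^+ 2.
  by apply: sumr_ge0 => i _; apply: sumr_ge0 => j _; exact: sqr_ge0.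
have E : forall i, \sum_(j in S) (g i - g j) ^+ 2 =
    (#|S|%:R * g i ^+ 2 + G2) - 2 * g i * G.
  move=> i.
  rewrite (eq_bigr (fun j => g i ^+ 2 + g j ^+ 2 - 2 * g i * g j)); last by move=> j _; ring.
  rewrite big_split /= big_split /= sumrN sumr_const -mulr_sumr -/G -/G2 -mulr_natl; ring.
rewrite (eq_bigr _ (fun i _ => E i)) in H.
rewrite big_split /= big_split /= sumrN -mulr_sumr -mulr_suml sumr_const mulr_natl in H.
rewrite -/G2 -/G in H.
have -> : G ^+ 2 = G * G by rewrite expr2.
rewrite -mulr_natl in H.
rewrite -mulr_sumr -/G in H; nra.
Qed.

Lemma ln2_gt0 : 0 < ln (2:R).
Proof. apply: ln_gt0; lra. Qed.

Lemma log2M (x y : R) : 0 < x -> 0 < y -> log2 (x * y) = log2 x + log2 y.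
Proof. by move=> hx hy; rewrite /log2 lnM ?posrE // mulrDl. Qed.

Lemma log2_div (x y : R) : 0 < x -> 0 < y -> log2 (x / y) = log2 x - log2 y.
Proof. by move=> hx hy; rewrite /log2 ln_div ?posrE // mulrBl. Qed.

Lemma log2_le (x y : R) : 0 < x -> x <= y -> log2 x <= log2 y.
Proof.
move=> hx hxy; rewrite /log2 ler_pM2r ?invr_gt0 ?ln2_gt0 //.
by rewrite ler_ln ?posrE //; apply: lt_le_trans hxy.
Qed.

Lemma log2_1 : log2 (1:R) = 0.
Proof. by rewrite /log2 ln1 mul0r. Qed.

Lemma log2_2 : log2 (2:R) = 1.
Proof. by rewrite /log2 divff // (gt_eqF ln2_gt0). Qed.

Lemma log2_ge0 (x : R) : 1 <= x -> 0 <= log2 x.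
Proof. by move=> hx; rewrite /log2; apply: divr_ge0; [exact: ln_ge0 | exact: ltW ln2_gt0]. Qed.

Lemma log2_sub1 (x : R) : 0 < x -> log2 x <= (x - 1) / ln 2.
Proof.
move=> hx; rewrite /log2 ler_pM2r ?invr_gt0 ?ln2_gt0 //.
have := @le_ln1Dx R (x - 1); have -> : 1 + (x - 1) = x by ring. apply; lra.
Qed.

Lemma ln_sub1 (x : R) : 0 < x -> ln x <= x - 1.
Proof. move=> hx; have := @le_ln1Dx R (x - 1); have -> : 1 + (x - 1) = x by ring. apply; lra. Qed.

Lemma minsub_le N (F : {set 'I_N} -> R) S : min_subsets F <= F S.
Proof. by rewrite /min_subsets (bigD1 S) //= ge_min lexx. Qed.

Lemma minsub_ge N (F : {set 'I_N} -> R) x :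
  (forall S, x <= F S) -> x <= min_subsets F.
Proof.
move=> H; rewrite /min_subsets; apply: (big_ind (fun y => x <= y)) => //.
by move=> a b ha hb; rewrite le_min ha hb.
Qed.

Lemma key N (HN : (2 <= N)%N) (D : R) (h g : 'I_N -> R) (S : {set 'I_N}) :
  0 < D -> (forall i, 0 <= h i) -> (forall i, 0 <= g i) ->
  log2 (1 + (\sum_(i in S) g i) ^+ 2) + log2 (1 + \sum_(j in ~: S) h j ^+ 2)
  - (log2 (1 + \sum_(i in S) g i ^+ 2)
              + log2 (1 + \sum_(j in ~: S) h j ^+ 2 / (1 + D))
              - #|S|%:R * log2 ((1 + D) / D)) <= gapstar D N.
Proof.
move=> hD hh hg.
set G := \sum_(i in S) g i; set G2 := \sum_(i in S) g i ^+ 2.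
set H2 := \sum_(j in ~: S) h j ^+ 2; set H2' := \sum_(j in ~: S) h j ^+ 2 / (1 + D).
set a := log2 ((1 + D) / D).
have ha : 0 <= a by apply: log2_ge0; rewrite ler_pdivlMr // mul1r; lra.
have hG2 : 0 <= G2 by apply: sumr_ge0 => i _; apply: sqr_ge0.
have hH2 : 0 <= H2 by apply: sumr_ge0 => i _; apply: sqr_ge0.
have hH2' : 0 <= H2' by apply: sumr_ge0 => i _; apply: divr_ge0; [apply: sqr_ge0|lra].
have hk : (#|S| <= N)%N by have := max_card S; rewrite card_ord.
set k := #|S|.
set k' := maxn k 1.
have hA : log2 (1 + G ^+ 2) <= log2 k'%:R + log2 (1 + G2).
  rewrite -log2M; last by lra.
    apply: log2_le; first by have := sqr_ge0 G; lra.
    have := @cs _ S g; rewrite -/G -/G2 -/k => hcs.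
    have hkk : (k%:R : R) <= k'%:R by rewrite ler_nat leq_maxl.
    have hk1 : (1 : R) <= k'%:R by rewrite ler1n leq_maxr.
    nra.
  by rewrite ltr0n leq_max orbT.
have hB : log2 (1 + H2) <= (if k == N then 0 else log2 (1 + D)) + log2 (1 + H2').
  case: eqP => hkN.
    rewrite /H2 /H2'; have -> : ~: S = finset.set0.
      apply: cards0_eq; have := cardsC S; rewrite card_ord -/k hkN; lia.
    by rewrite !big_set0 add0r.
  rewrite -log2M; [|lra|lra].
  apply: log2_le; first lra.
  have -> : (1 + D) * (1 + H2') = 1 + D + (1 + D) * H2' by ring.
  have -> : (1 + D) * H2' = H2.
    by rewrite /H2' mulr_sumr; apply: eq_bigr => i _; rewrite mulrC divfK //; lra.
  lra.
have hl : 0 <= log2 (1 + D) by apply: log2_ge0; lra.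
rewrite /gapstar -/a.
case: eqP hB => hkN hB.
  rewrite le_max; apply/orP; left.
  have ek : k' = N by rewrite /k' hkN; apply/maxn_idPl; lia.
  rewrite ek in hA.
  rewrite add0r in hB.
  have hkr : (k%:R : R) = N%:R by rewrite hkN.
  rewrite -/k hkr. lra.
rewrite le_max; apply/orP; right.
have h1 : log2 (k'%:R : R) <= log2 ((N.-1)%:R : R).
  apply: log2_le; first by rewrite ltr0n leq_max orbT.
  rewrite ler_nat /k'; lia.
have h2 : (k%:R : R) * a <= (N.-1)%:R * a.
  by apply: ler_wpM2r => //; rewrite ler_nat; lia.
rewrite -/k; lra.
Qed.

Lemma part_i N (HN : (2 <= N)%N) (D : R) (h g : 'I_N -> R) :
  0 < D -> (forall i, 0 <= h i) -> (forall i, 0 <= g i) ->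
  Cbar h g - RQMF h g D <= gapstar D N.
Proof.
move=> hD hh hg.
suff: Cbar h g - gapstar D N <= RQMF h g D by lra.
apply: minsub_ge => S.
have k := @key N HN D h g S hD hh hg.
have c : Cbar h g <= log2 (1 + (\sum_(i in S) g i) ^+ 2) + log2 (1 + \sum_(j in ~: S) h j ^+ 2)
  := minsub_le _ _ S.
match goal with |- context[pos_part ?z] => have p : z <= pos_part z by rewrite /pos_part le_max lexx end.
lra.
Qed.

Lemma amgm (n D : R) : 1 < n -> 0 < D ->
  (n - 1) * ln (n / (n - 1)) + ln n <= (n - 1) * ln ((1 + D) / D) + ln (1 + D).
Proof.
move=> hn hD.
have p1 : 0 < D * n / ((n - 1) * (1 + D)).
  apply: divr_gt0; apply: mulr_gt0; lra.
have p2 : 0 < n / (1 + D) by apply: divr_gt0; lra.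
have e : (n - 1) * (D * n / ((n - 1) * (1 + D)) - 1) + (n / (1 + D) - 1) = 0.
  by field; rewrite !lt0r_neq0 //; lra.
move: (ln_sub1 _ p1) (ln_sub1 _ p2).
rewrite !ln_div ?posrE; try (apply: mulr_gt0); try lra.
rewrite !lnM ?posrE; try lra.
move=> q1 q2.
have hn1 : 0 < n - 1 by lra.
nra.
Qed.

Lemma log2_3 : log2 (3 / 2 : R) = log2 3 - 1.
Proof. by rewrite log2_div ?log2_2 //; lra. Qed.

Lemma gap2_eq : gapstar (Delta_opt R 2) 2 = gapstar_val R 2.
Proof.
rewrite /Delta_opt /gapstar /gapstar_val /=.
have -> : ((2%:R / 1%:R) : R) = 2 by rewrite divr1.
have -> : (1 + 2 : R) = 3 by lra.
rewrite log2_3 log2_2.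
have -> : (1%:R : R) = 1 by [].
rewrite log2_1.
rewrite max_r; lra.
Qed.

Lemma gap2_opt (D : R) : 0 < D -> gapstar_val R 2 <= gapstar D 2.
Proof.
move=> hD; rewrite /gapstar /gapstar_val /=.
have -> : (1%:R : R) = 1 by [].
rewrite log2_1 log2_2 le_max.
have [hD2|hD2] := lerP D 2.
- apply/orP; left.
  have : log2 (3/2 : R) <= log2 ((1 + D) / D).
    apply: log2_le; first lra.
    rewrite ler_pdivlMr // mulrAC ler_pdivrMr; lra.
  rewrite log2_3; lra.
- apply/orP; right.
  rewrite add0r mul1r -log2M; [|apply: divr_gt0; lra|lra].
  have : log2 (3/2 * 3 : R) <= log2 ((1 + D) / D * (1 + D)).
    apply: log2_le; first lra.
    rewrite [X in _ <= X]mulrAC ler_pdivlMr //; nra.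
  rewrite (log2M (3/2) 3); [|lra|lra]. rewrite log2_3; lra.
Qed.

Lemma natm1 N : (0 < N)%N -> (N%:R : R) = (N.-1)%:R + 1.
Proof. by move=> h; rewrite natr1 prednK. Qed.

Lemma Dne2 N : (2 < N)%N -> Delta_opt R N = (N.-1)%:R.
Proof. move=> h; rewrite /Delta_opt; case: eqP => //; lia. Qed.

Lemma gapN_eq N : (2 < N)%N -> gapstar (Delta_opt R N) N = gapstar_val R N.
Proof.
move=> hN; rewrite Dne2 // /gapstar /gapstar_val.
have -> : (N == 2) = false by apply/eqP; lia.
have hn := natm1 _ (ltnW (ltnW hN)) .
set m := (N.-1)%:R : R.
have hm : 2 <= m by rewrite /m (ler_nat R 2); lia.
have -> : 1 + m = N%:R by lra.
rewrite log2_div; [|lra|lra].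
set Ln := log2 N%:R; set Lm := log2 m.
have hL : Ln <= Lm + Lm.
  rewrite /Ln /Lm -log2M; [|lra|lra]; apply: log2_le; nra.
rewrite max_r; last by rewrite hn; nra.
rewrite hn; ring.
Qed.

Lemma gapN_opt N (D : R) : (2 < N)%N -> 0 < D -> gapstar_val R N <= gapstar D N.
Proof.
move=> hN hD; rewrite -gapN_eq // Dne2 // /gapstar.
have hn := natm1 _ (ltnW (ltnW hN)).
set m := (N.-1)%:R : R.
have hm : 2 <= m by rewrite /m (ler_nat R 2); lia.
have -> : 1 + m = N%:R by lra.
have A := amgm N%:R D.
have {A} := A ltac:(lra) hD.
have -> : N%:R - 1 = m by lra.
move=> A.
have B : m * log2 (N%:R / m) + log2 N%:R <= m * log2 ((1 + D) / D) + log2 (1 + D).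
  have E : forall u v, m * log2 u + log2 v = (m * ln u + ln v) / ln 2.
    by move=> u v; rewrite /log2; field; rewrite lt0r_neq0 // ln2_gt0.
  by rewrite !E ler_pM2r // invr_gt0 ln2_gt0.
have C : gapstar (N.-1)%:R N = log2 m + m * log2 (N%:R / m) + log2 N%:R.
  have := gapN_eq N hN; rewrite Dne2 // /gapstar_val.
  have -> : (N == 2) = false by apply/eqP; lia.
  rewrite /gapstar -/m.
  have -> : 1 + m = N%:R by lra.
  move=> ->; rewrite log2_div; [|lra|lra]; rewrite hn; ring.
rewrite /gapstar -/m in C.
have e1 : 1 + m = N%:R by lra. rewrite e1 in C.
rewrite C le_max; apply/orP; right; lra.
Qed.


Lemma theta M : (2 <= M)%N ->
  1 * log2 (M%:R : R) <= gapstar_val R M /\ gapstar_val R M <= (2 / ln 2 + 3) * log2 (M%:R : R).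
Proof.
move=> hM.
have hc : 0 < 2 / ln (2:R) by apply: divr_gt0; [lra| exact: ln2_gt0].
case: (M =P 2) => [->|hM2].
- rewrite /gapstar_val /= log2_2 mul1r mulr1.
  have h3 : 1 <= log2 (3:R) by have := log2_le 2 3 ltac:(lra) ltac:(lra); rewrite log2_2.
  have e : log2 (2 * 2 : R) = 2 by rewrite (log2M 2 2) ?log2_2; lra.
  have h4 : log2 (3:R) <= 2 by rewrite -e; apply: log2_le; lra.
  split; lra.
have hM3 : (2 < M)%N by lia.
rewrite /gapstar_val.
have -> : (M == 2) = false by apply/eqP; lia.
have hn := natm1 _ (ltnW (ltnW hM3)).
set m := (M.-1)%:R : R.
have hm : 2 <= m by rewrite /m (ler_nat R 2); lia.
set n := M%:R : R in hn *.
have hq : 1 <= n / m by rewrite ler_pdivlMr; lra.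
have hq0 := log2_ge0 _ hq.
have hup : n * log2 (n / m) <= 2 / ln 2.
  have hnm : 0 < n / m by lra.
  have := log2_sub1 _ hnm.
  have E : n * ((n / m - 1) / ln 2) = (n / m) / ln 2.
    rewrite hn -/m; field. by rewrite (lt0r_neq0 ln2_gt0) lt0r_neq0 //; rewrite -/m; lra.
  have F : n / m <= 2 by rewrite ler_pdivrMr; lra.
  have G : n / m / ln 2 <= 2 / ln 2 by rewrite ler_pM2r // invr_gt0 ln2_gt0.
  have hn0 : 0 <= n by lra.
  move=> H; have := ler_wpM2l hn0 H; lra.
have hLn : 1 <= log2 n by have := log2_le 2 n ltac:(lra) ltac:(lra); rewrite log2_2.
have hL : log2 n <= log2 m + log2 m.
  rewrite -log2M; [|lra|lra]; apply: log2_le; nra.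
have hmn : log2 m <= log2 n by apply: log2_le; lra.
split; nra.
Qed.

End H.

Theorem mainTheorem7 (R : realType) (N : nat) (HN : (2 <= N)%N) :
  (* (i) *)
  (forall (D : R) (h g : 'I_N -> R), 0 < D ->
     (forall i, 0 <= h i) -> (forall i, 0 <= g i) ->
     Cbar h g - RQMF h g D <= gapstar D N)
  (* (ii) the minimum over Delta > 0 of gap^*(Delta;N) is attained at Delta_opt
     and equals gap^*(N) *)
  /\ (0 < Delta_opt R N /\ forall D : R, 0 < D -> gapstar (Delta_opt R N) N <= gapstar D N)
  /\ gapstar (Delta_opt R N) N = gapstar_val R N
  (* in particular, with Delta = Delta_opt at all relays *)
  /\ (forall h g : 'I_N -> R,
        (forall i, 0 <= h i) -> (forall i, 0 <= g i) ->
        Cbar h g - RQMF h g (Delta_opt R N) <= gapstar_val R N)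
  (* gap^*(N) = Theta(log N) *)
  /\ (exists c1 c2 : R, 0 < c1 /\ 0 < c2 /\
        forall M : nat, (2 <= M)%N ->
          c1 * log2 M%:R <= gapstar_val R M /\ gapstar_val R M <= c2 * log2 M%:R).
Proof.
have [E2|HN3] : N = 2%N \/ (2 < N)%N by lia.
- have hDopt : 0 < Delta_opt R N by rewrite E2 /Delta_opt /= divr1; lra.
  have Heq : gapstar (Delta_opt R N) N = gapstar_val R N by rewrite E2 gap2_eq.
  split; first by move=> D h g; exact: part_i.
  split; first by split => // D hD; rewrite Heq E2; exact: gap2_opt.
  split => //.
  split; first by move=> h g hh hg; rewrite -Heq; exact: part_i.
  exists 1, (2 / ln 2 + 3); split; first lra.
  split; first by apply: addr_gt0; [apply: divr_gt0; [lra|exact: ln2_gt0]|lra].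
  by move=> M hM; exact: theta.
- have hDopt : 0 < Delta_opt R N by rewrite Dne2 // ltr0n; lia.
  have Heq := gapN_eq R N HN3.
  split; first by move=> D h g; exact: part_i.
  split; first by split => // D hD; rewrite Heq; exact: gapN_opt.
  split => //.
  split; first by move=> h g hh hg; rewrite -Heq; exact: part_i.
  exists 1, (2 / ln 2 + 3); split; first lra.
  split; first by apply: addr_gt0; [apply: divr_gt0; [lra|exact: ln2_gt0]|lra].
  by move=> M hM; exact: theta.
Qed.
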